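(* Let $n\in\mathbf{N}$ and $A\subset[n]$ have property P. For $a\in A\cap[1,\frac n2]$ let $p_a\geqslant0$ be the unique integer with $2^{p_a}a\in(\frac n4,\frac n2]$, let $B_{\frac12}=\{2^{p_a}a:a\in A\cap[1,\frac n2]\}$ and $B^{i(3)}_{\frac12}=B_{\frac12}\cap(i+3\mathbf{Z})$. Write $U=A\cap(\frac n2,n]\cap(1+3\mathbf{Z})$ and $A_{(\frac23,1]}=A\cap(\frac{2n}{3},n]$. Suppose $|U|\geqslant\frac n{12}+3$. Then $$\left|B^{2(3)}_{\frac12}\right|\leqslant\frac n{12}+2-\frac{|U|}{2},\qquad \left|B^{1(3)}_{\frac12}\right|\leqslant\frac n{10}+2-\frac{2|U|}{5}.$$ Moreover, if $\big(A_{(\frac23,1]}+A_{(\frac23,1]}\big)\cap4\mathbf{Z}$ contains an arithmetic progression of size at least $\frac{|A_{(\frac23,1]}|}{2}-1$, then either $|A_{(\frac23,1]}|\leqslant\frac n9+4$ or $$\left|B^{1(3)}_{\frac12}\right|\leqslant\frac{11n}{90}+4-\frac{2|U|}{5}-\frac{|A_{(\frac23,1]}|}{6}.$$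
   Context: A set $A\subset\mathbf{N}$ has property P if there are no $x,y,z\in A$ (not necessarily distinct $x,y$) with $z<x$, $z<y$ and $z\mid x+y$. Intervals denote sets of integers. *)

(* Defs.v *)
From mathcomp Require Import all_boot all_order all_algebra.
Set Implicit Arguments. Unset Strict Implicit. Unset Printing Implicit Defensive.
Import Order.TTheory GRing.Theory Num.Theory.

Definition subset_n (n : nat) (A : pred nat) : Prop :=
  forall x, A x -> (1 <= x) && (x <= n).

Definition card_n (n : nat) (S : pred nat) : nat := count S (iota 1 n).

Definition propP (A : pred nat) : Prop :=
  ~ exists x y z, [/\ A x, A y, A z & [/\ z < x, z < y & z %| x + y]].

(* B_{1/2} = { 2^{p_a} a : a in A cap [1, n/2] }, where p_a >= 0 is the unique
   integer with 2^{p_a} a in (n/4, n/2].  Membership of b: b = 2^p a for some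
   such a and some p with 2^p a in (n/4, n/2] (p is then p_a by uniqueness). *)
Definition B_half (n : nat) (A : pred nat) : pred nat := fun b =>
  [&& n < 4 * b, 2 * b <= n &
   has (fun a => [&& A a, 1 <= a, 2 * a <= n &
                    [exists p : 'I_b.+1, 2 ^ p * a == b]]) (iota 1 n)].

Definition B_half_mod3 (n : nat) (A : pred nat) (i : nat) : pred nat :=
  fun b => B_half n A b && (b %% 3 == i %% 3).

Definition U_set (n : nat) (A : pred nat) : pred nat :=
  fun x => [&& A x, n < 2 * x, x <= n & x %% 3 == 1].

Definition A_top (n : nat) (A : pred nat) : pred nat :=
  fun x => [&& A x, 2 * n < 3 * x & x <= n].

Definition sumset (S : pred nat) (s : nat) : Prop :=
  exists x y, [/\ S x, S y & x + y = s].

Definition contains_AP (T : nat -> Prop) (m : nat) : Prop :=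
  exists a d, 0 < d /\ forall k, k < m -> T (a + k * d).

(* Main.v *)
Require Import Defs.
From mathcomp Require Import all_boot all_order all_algebra.
From mathcomp Require Import zify ring lra.
Set Implicit Arguments. Unset Strict Implicit. Unset Printing Implicit Defensive.


Lemma inj_count_list (l t : seq nat) (R : pred nat) :
  uniq l -> (forall y, y \in l -> (y \in t) && R y) -> size l <= count R t.
Proof.
move=> ul H; rewrite -size_filter; apply: uniq_leq_size => // y yl.
by rewrite mem_filter; case/andP: (H y yl) => -> ->.
Qed.

Lemma class_count (s : seq nat) (P : pred nat) lo hi m r :
  uniq s -> 0 < m ->
  (forall x, x \in s -> P x -> (lo < x <= hi) && (x %% m == r)) ->
  m * count P s <= hi - lo + m - 1.
Proof.
move=> us m0 H.
case: (leqP hi lo) => hl.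
  have -> : count P s = 0.
    apply/eqP; rewrite -leqn0 leqNgt -has_count; apply/hasP => -[x xs Px].
    by move: (H x xs Px); lia.
  by rewrite muln0.
set f := fun x => (x - lo.+1) %/ m.
set K := (hi - lo.+1) %/ m + 1.
have Hc : count P s <= K.
  rewrite -size_filter -(size_map f).
  have -> : K = count predT (iota 0 K) by rewrite count_predT size_iota.
  apply: inj_count_list.
    rewrite map_inj_in_uniq ?filter_uniq // => x y.
    rewrite !mem_filter => /andP[Px xs] /andP[Py ys].
    move: (H x xs Px) (H y ys Py) => /andP[/andP[h1 h2] /eqP h3] /andP[/andP[h4 h5] /eqP h6].
    rewrite /f => E.
    have Ex : x = lo.+1 + (x - lo.+1) by lia.
    have Ey : y = lo.+1 + (y - lo.+1) by lia.
    move: h3 h6; rewrite Ex Ey.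
    move: (x - lo.+1) (y - lo.+1) E => dx dy E.
    rewrite (divn_eq dx m) (divn_eq dy m) E.
    rewrite !addnA -!(addnC (dy %/ m * m)) -!addnA !modnMDl => h3 h6.
    have : (lo.+1 + dx %% m) %% m == (lo.+1 + dy %% m) %% m by rewrite h3 h6.
    rewrite eqn_modDl !modn_mod => /eqP ->; done.
  move=> y /mapP[x]; rewrite mem_filter => /andP[Px xs] ->.
  rewrite mem_iota /= add0n /f /K; move: (H x xs Px) => /andP[/andP[h1 h2] _].
  by rewrite addn1 ltnS andbT; apply: leq_div2r; lia.
have : m * count P s <= m * K by rewrite leq_mul2l Hc orbT.
rewrite /K mulnDr muln1 => h.
apply: (leq_trans h).
have := leq_trunc_div (hi - lo.+1) m.
rewrite mulnC; lia.
Qed.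


Lemma count_split (s : seq nat) (P Q : pred nat) :
  count P s = count (fun x => P x && Q x) s + count (fun x => P x && ~~ Q x) s.
Proof. elim: s => //= x s ->; case: (P x); case: (Q x) => /=; lia. Qed.

Lemma sum_count (s t : seq nat) (Bs X Y R : pred nat) (g : nat -> nat) (mX MY : nat) :
 uniq s -> uniq t -> injective g ->
 (forall b, b \in s -> Bs b -> (g b \in t) && R (g b)) ->
 (forall x y, x \in s -> y \in s -> X x -> Y y -> (x + y \in t) && R (x + y)) ->
 (forall b x y, b \in s -> x \in s -> y \in s -> Bs b -> X x -> Y y -> g b != x + y) ->
 mX \in s -> X mX -> (forall x, x \in s -> X x -> mX <= x) ->
 MY \in s -> Y MY -> (forall y, y \in s -> Y y -> y <= MY) ->
 count Bs s + count X s + count Y s <= (count R t).+1.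
Proof.
move=> us ut ig HB HS Hav ms Xm Hm Ms YM HM.
set l1 := map g (filter Bs s).
set l2 := map (fun x => x + MY) (filter X s).
set l3 := map (fun y => mX + y) (filter (fun y => Y y && (y != MY)) s).
have cY : count Y s = (count (fun y => Y y && (y != MY)) s).+1.
  rewrite (count_split s Y (fun y => y != MY)).
  have -> : count (fun x => Y x && ~~ (x != MY)) s = 1.
    have := count_uniq_mem MY us; rewrite Ms /= => <-.
    by apply: eq_count => y /=; rewrite negbK; case: (y =P MY) => [->|]; rewrite ?YM ?andbF.
  by rewrite addn1.
have sz : size (l1 ++ l2 ++ l3) = count Bs s + count X s + count (fun y => Y y && (y != MY)) s.
  by rewrite !size_cat !size_map !size_filter addnA.
rewrite cY addnS ltnS -sz.
apply: inj_count_list.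
- rewrite !cat_uniq.
  apply/and5P; split.
  + by rewrite map_inj_uniq ?filter_uniq.
  + apply/hasPn => z; rewrite mem_cat => /orP[] /mapP[x]; rewrite mem_filter.
    * move=> /andP[Xx xs] ->; apply/negP => /mapP[b]; rewrite mem_filter => /andP[Bb bs] /eqP.
      by rewrite eq_sym (negbTE (Hav b x MY bs xs Ms Bb Xx YM)).
    * move=> /andP[/andP[Yy _] ys] ->; apply/negP => /mapP[b]; rewrite mem_filter => /andP[Bb bs] /eqP.
      by rewrite eq_sym (negbTE (Hav b mX x bs ms ys Bb Xm Yy)).
  + by rewrite map_inj_uniq ?filter_uniq //; apply: addIn.
  + apply/hasPn => z /mapP[y]; rewrite mem_filter => /andP[/andP[Yy yM] ys] ->.
    apply/negP => /mapP[x]; rewrite mem_filter => /andP[Xx xs] E.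
    have := Hm x xs Xx; have := HM y ys Yy; move: yM E; lia.
  + by rewrite map_inj_uniq ?filter_uniq //; apply: addnI.
- move=> z; rewrite !mem_cat => /or3P[] /mapP[x]; rewrite mem_filter.
  + by move=> /andP[Bx xs] ->; apply: HB.
  + by move=> /andP[Xx xs] ->; apply: HS.
  + by move=> /andP[/andP[Yx _] xs] ->; apply: HS.
Qed.


Lemma count2 (s t : seq nat) (P Q R : pred nat) (f g : nat -> nat) :
  uniq s -> uniq t -> injective f -> injective g ->
  (forall x, x \in s -> P x -> (f x \in t) && R (f x)) ->
  (forall x, x \in s -> Q x -> (g x \in t) && R (g x)) ->
  (forall x y, x \in s -> y \in s -> P x -> Q y -> f x != g y) ->
  count P s + count Q s <= count R t.
Proof.
move=> us ut fi gi HP HQ Hd.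
have -> : count P s + count Q s = size (map f (filter P s) ++ map g (filter Q s)).
  by rewrite size_cat !size_map !size_filter.
apply: inj_count_list.
  rewrite cat_uniq; apply/and3P; split; try by rewrite map_inj_uniq ?filter_uniq.
  apply/hasPn => z /mapP[y].
  rewrite mem_filter => /andP[Qy ys] ->; apply/negP => /mapP[x].
  by rewrite mem_filter => /andP[Px xs] /eqP; rewrite eq_sym (negbTE (Hd x y xs ys Px Qy)).
by move=> z; rewrite mem_cat => /orP[] /mapP[x]; rewrite mem_filter => /andP[? ?] ->;
  [apply: HP | apply: HQ].
Qed.

Lemma count1 (s t : seq nat) (P R : pred nat) (f : nat -> nat) :
  uniq s -> uniq t -> injective f ->
  (forall x, x \in s -> P x -> (f x \in t) && R (f x)) ->
  count P s <= count R t.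
Proof.
move=> us ut fi HP.
have -> : count P s = size (map f (filter P s)) by rewrite size_map size_filter.
apply: inj_count_list; first by rewrite map_inj_uniq ?filter_uniq.
by move=> z /mapP[x]; rewrite mem_filter => /andP[? ?] ->; apply: HP.
Qed.

Lemma sum_count_iota N (t : seq nat) (Bs X Y R : pred nat) (g : nat -> nat) :
 uniq t -> injective g ->
 (forall b, b \in iota 1 N -> Bs b -> (g b \in t) && R (g b)) ->
 (forall x y, x \in iota 1 N -> y \in iota 1 N -> X x -> Y y -> (x + y \in t) && R (x + y)) ->
 (forall b x y, b \in iota 1 N -> x \in iota 1 N -> y \in iota 1 N -> Bs b -> X x -> Y y -> g b != x + y) ->
 (exists x, (x \in iota 1 N) && X x) -> (exists y, (y \in iota 1 N) && Y y) ->
 count Bs (iota 1 N) + count X (iota 1 N) + count Y (iota 1 N) <= (count R t).+1.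
Proof.
move=> ut gi HB HS Hav ex1 ex2.
case: (ex_minnP ex1) => mX /andP[ms Xm] Hmin.
have ub : forall y, (y \in iota 1 N) && Y y -> y <= N.
  by move=> y /andP[]; rewrite mem_iota; lia.
case: (ex_maxnP ex2 ub) => MY /andP[Ms YM] Hmax.
apply: (sum_count (iota_uniq 1 N) ut gi HB HS Hav ms Xm _ Ms YM).
- by move=> x xs Xx; apply: Hmin; rewrite xs Xx.
- by move=> y ys Yy; apply: Hmax; rewrite ys Yy.
Qed.

Lemma B_ex n A b : B_half n A b ->
  [/\ n < 4 * b, 2 * b <= n & exists a, [/\ A a, 0 < a, 2 * a <= n & (a %| b)%N]].
Proof.
case/and3P => h1 h2 /hasP[a _ /and4P[Aa a1 a2 /existsP[p /eqP E]]].
split => //; exists a; split => //; by rewrite -E dvdn_mull.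
Qed.

Lemma B_avoid n A b x y : propP A -> B_half n A b -> A x -> A y ->
  n < 2 * x -> n < 2 * y -> (b %| x + y)%N -> False.
Proof.
move=> P /B_ex[h1 h2 [a [Aa a0 a2 ab]]] Ax Ay hx hy bd.
apply: P; exists x, y, a; split => //; split; [lia | lia | exact: dvdn_trans ab bd].
Qed.


Lemma inj_mul k : 0 < k -> injective (fun b => k * b).
Proof. by move=> k0 x y /eqP; rewrite eqn_mul2l eqn0Ngt k0 /= => /eqP. Qed.

Lemma claim1 n A : propP A ->
  n + 36 <= 12 * count (U_set n A) (iota 1 n) ->
  12 * count (B_half_mod3 n A 2) (iota 1 n) + 6 * count (U_set n A) (iota 1 n) <= n + 24.
Proof.
set s := iota 1 n.
set U := U_set n A.
set B2 := B_half_mod3 n A 2.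
move=> P hU.
have Ux : forall x, U x -> [/\ A x, n < 2 * x, x <= n & x %% 3 == 1].
  by move=> x /and4P.
have Bx : forall b, B2 b -> B_half n A b /\ b %% 3 = 2.
  by move=> b /andP[h /eqP].
set Ue := fun x => U x && (x %% 2 == 0).
set V1 := fun x => U x && (x %% 12 == 1).
set V7 := fun x => U x && (x %% 12 == 7).
have cU : count U s = count Ue s + count V1 s + count V7 s.
  rewrite (count_split s U (fun x => x %% 2 == 0)) -addnA; congr (_ + _).
  rewrite (count_split s _ (fun x => x %% 12 == 1)); congr (_ + _);
  apply: eq_count => x /=; rewrite /V1 /V7; case Uxx: (U x) => //=;
  case: (Ux x Uxx) => _ _ _ h; apply/idP/idP; lia.
set Pe := fun x => (n %/ 2 < x <= n) && (x %% 6 == 4).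
have h1a : count B2 s + count Ue s <= count Pe s.
  apply: (@count2 _ _ B2 Ue Pe _ id (iota_uniq 1 n) (iota_uniq 1 n) (inj_mul (isT : 0 < 2)) (@inj_id nat)).
  - move=> b bs /Bx[/B_ex[h1 h2 _] h3]; rewrite mem_iota /Pe; apply/andP; split; lia.
  - move=> x xs /andP[/Ux[_ h1 h2 h3] h4]; rewrite /Pe xs /=; lia.
  - move=> b y bs ys /Bx[hb _] /andP[/Ux[Ay h1 h2 h3] _]; apply/negP => /eqP E.
    apply: (B_avoid P hb Ay Ay h1 h1); rewrite -E; apply/dvdnP; exists 4; lia.
have hPe : 6 * count Pe s <= n - n %/ 2 + 6 - 1.
  apply: (class_count (r:=4)) => //; first exact: iota_uniq.
have cV : forall r, r < 12 -> 12 * count (fun x => U x && (x %% 12 == r)) s <= n - n %/ 2 + 12 - 1.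
  move=> r r12; apply: (class_count (r:=r)) => //; first exact: iota_uniq.
  move=> x _ /andP[/Ux[_ h1 h2 _] h3]; rewrite h3 andbT; apply/andP; split; lia.
have hV1 := cV 1 isT. have hV7 := cV 7 isT.
rewrite -/V1 in hV1; rewrite -/V7 in hV7.
case: (boolP [exists x : 'I_n.+1, V1 x]) => [/existsP[x1 V1x]|nV1]; last first.
  have : count V1 s = 0.
    apply/eqP; rewrite -leqn0 leqNgt -has_count; apply/negP => /hasP[x xs V1x].
    move/negP: nV1; apply; apply/existsP.
    have xn : x < n.+1 by move: xs; rewrite mem_iota; lia.
    by exists (Ordinal xn).
  lia.
case: (boolP [exists x : 'I_n.+1, V7 x]) => [/existsP[x7 V7x]|nV7]; last first.
  have : count V7 s = 0.
    apply/eqP; rewrite -leqn0 leqNgt -has_count; apply/negP => /hasP[x xs V7x].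
    move/negP: nV7; apply; apply/existsP.
    have xn : x < n.+1 by move: xs; rewrite mem_iota; lia.
    by exists (Ordinal xn).
  lia.
set R8 := fun z => (n < z <= n + n) && (z %% 12 == 8).
have h1b : count B2 s + count V1 s + count V7 s <= (count R8 (iota 1 (n + n))).+1.
  apply: (sum_count_iota (iota_uniq 1 _) (inj_mul (isT : 0 < 4))).
  - move=> b bs /Bx[/B_ex[h1 h2 _] h3]; rewrite mem_iota /R8; apply/andP; split; lia.
  - move=> x y xs ys /andP[/Ux[_ h1 h2 h3] h4] /andP[/Ux[_ h5 h6 h7] h8];
    rewrite mem_iota /R8; apply/andP; split; lia.
  - move=> b x y bs xs ys /Bx[hb _] /andP[/Ux[Ax h1 _ _] _] /andP[/Ux[Ay h2 _ _] _].
    apply/negP => /eqP E; apply: (B_avoid P hb Ax Ay h1 h2); rewrite -E; apply/dvdnP; exists 4; lia.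
  - exists (nat_of_ord x1); rewrite V1x andbT mem_iota; case/andP: V1x => /Ux[_ h1 h2 _] _; lia.
  - exists (nat_of_ord x7); rewrite V7x andbT mem_iota; case/andP: V7x => /Ux[_ h1 h2 _] _; lia.
have hR8 : 12 * count R8 (iota 1 (n + n)) <= n + n - n + 12 - 1.
  apply: (class_count (r:=8)) => //; first exact: iota_uniq.
lia.
Qed.


Lemma ex_or0 (s : seq nat) (X : pred nat) : (exists x, (x \in s) && X x) \/ count X s = 0.
Proof.
case H: (has X s).
  by left; case/hasP: H => x xs Xx; exists x; rewrite xs.
by right; apply/eqP; rewrite -leqn0 leqNgt -has_count H.
Qed.

Lemma core23 n A (Bs : pred nat) : propP A ->
  n + 36 <= 12 * count (U_set n A) (iota 1 n) ->
  (forall b, b \in iota 1 n -> Bs b ->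
     (5 * b \in iota 1 (5 * n)) && ((n < 5 * b <= 5 * (n %/ 2)) && ((5 * b) %% 15 == 5))) ->
  (forall b x y, b \in iota 1 n -> x \in iota 1 n -> y \in iota 1 n -> Bs b ->
     U_set n A x -> U_set n A y -> 5 * b != x + y) ->
  5 * count Bs (iota 1 n) + 2 * count (U_set n A) (iota 1 n) <=
  5 * count (fun z => (n < z <= 5 * (n %/ 2)) && (z %% 15 == 5)) (iota 1 (5 * n)) + 5.
Proof.
set s := iota 1 n.
set U := U_set n A.
set R := fun z => (n < z <= 5 * (n %/ 2)) && (z %% 15 == 5).
set t := iota 1 (5 * n).
move=> P hU HB Hav.
have Ux : forall x, U x -> [/\ A x, n < 2 * x, x <= n & x %% 3 == 1].
  by move=> x /and4P.
set Ui := fun i x => U x && (x %% 5 == i).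
have cU : count U s = count (Ui 0) s + count (Ui 1) s + count (Ui 2) s + count (Ui 3) s + count (Ui 4) s.
  rewrite /Ui /s; elim: (iota 1 n) => //= x s' ->; case: (U x) => /=; last by lia.
  have : x %% 5 < 5 by rewrite ltn_mod.
  move: (x %% 5) => r; case: r => [|[|[|[|[|r]]]]] //= _; lia.
have nbig : 20 <= n.
  have : 3 * count U s <= n - n %/ 2 + 3 - 1.
    apply: (class_count (r:=1)) => //; first exact: iota_uniq.
    by move=> x _ /Ux[_ h1 h2 h3]; rewrite h3 andbT; apply/andP; split; lia.
  lia.
have cls : forall i r, r %% 3 = 1 -> r %% 5 = i -> r < 15 ->
    15 * count (Ui i) s <= n - n %/ 2 + 15 - 1.
  move=> i r h1 h2 h3; apply: (class_count (r:=r)) => //; first exact: iota_uniq.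
  move=> x _ /andP[/Ux[_ k1 k2 k3] k4]; apply/andP; split; first by lia.
  apply/eqP; move/eqP: k4 => k4; move/eqP: k3 => k3.
  have : x %% 15 < 15 by rewrite ltn_mod.
  lia.
have c0 := cls 0 10 erefl erefl isT.
have c1 := cls 1 1 erefl erefl isT.
have c2 := cls 2 7 erefl erefl isT.
have c3 := cls 3 13 erefl erefl isT.
have c4 := cls 4 4 erefl erefl isT.
have triv : count Bs s <= count R t.
  by apply: (count1 (iota_uniq 1 n) (iota_uniq 1 _) (inj_mul (isT : 0 < 5))).
have pair : forall i j, (i + j) %% 5 = 0 ->
    (exists x, (x \in s) && Ui i x) -> (exists y, (y \in s) && Ui j y) ->
    count Bs s + count (Ui i) s + count (Ui j) s <= (count R t).+1.
  move=> i j hij e1 e2.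
  apply: (sum_count_iota (iota_uniq 1 _) (inj_mul (isT : 0 < 5))) => //.
  - move=> x y xs ys /andP[/Ux[_ h1 h2 h3] /eqP h4] /andP[/Ux[_ h5 h6 h7] /eqP h8].
    rewrite mem_iota /R; apply/andP; split; first by lia.
    apply/andP; split; first by lia.
    apply/eqP; move/eqP: h3 => h3; move/eqP: h7 => h7.
    have : (x + y) %% 15 < 15 by rewrite ltn_mod.
    lia.
  - by move=> b x y bs xs ys Bb /andP[Ux' _] /andP[Uy' _]; apply: Hav.
have p00 : count Bs s + 2 * count (Ui 0) s <= (count R t).+1.
  case: (ex_or0 s (Ui 0)) => [e|e]; last by lia.
  have := pair 0 0 erefl e e; lia.
case: (ex_or0 s (Ui 1)) => [e1|e1]; case: (ex_or0 s (Ui 4)) => [e4|e4];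
case: (ex_or0 s (Ui 2)) => [e2|e2]; case: (ex_or0 s (Ui 3)) => [e3|e3];
try (have p14 := pair 1 4 erefl e1 e4); try (have p23 := pair 2 3 erefl e2 e3); lia.
Qed.


Lemma Rbound n : 15 * count (fun z => (n < z <= 5 * (n %/ 2)) && (z %% 15 == 5)) (iota 1 (5 * n))
   <= 5 * (n %/ 2) - n + 15 - 1.
Proof. by apply: (class_count (r:=5)) => //; exact: iota_uniq. Qed.

Lemma claim2 n A : propP A ->
  n + 36 <= 12 * count (U_set n A) (iota 1 n) ->
  10 * count (B_half_mod3 n A 1) (iota 1 n) + 4 * count (U_set n A) (iota 1 n) <= n + 20.
Proof.
move=> P hU.
have H : 5 * count (B_half_mod3 n A 1) (iota 1 n) + 2 * count (U_set n A) (iota 1 n) <=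
  5 * count (fun z => (n < z <= 5 * (n %/ 2)) && (z %% 15 == 5)) (iota 1 (5 * n)) + 5.
  apply: core23 => //.
  - move=> b bs /andP[/B_ex[h1 h2 _] /eqP h3]; rewrite mem_iota; apply/andP; split; first by lia.
    apply/andP; split; first by lia. apply/eqP; lia.
  - move=> b x y bs xs ys /andP[hb _] /and4P[Ax h1 _ _] /and4P[Ay h2 _ _].
    apply/negP => /eqP E; apply: (B_avoid P hb Ax Ay h1 h2); rewrite -E; apply/dvdnP; exists 5; lia.
have := Rbound n; lia.
Qed.

Lemma lb3 (b e : nat) : e = 1 \/ e = 2 -> forall m,
  m <= 3 * count (fun j => (b + j * e) %% 3 == 1) (iota 0 m) + 2.
Proof.
move=> he m; elim: m {-2}m (leqnn m) => [|N IH] m hm; first by lia.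
case: (leqP m 2) => h2; first by lia.
have -> : m = (m - 3) + 3 by lia.
rewrite iotaD count_cat.
have : 1 <= count (fun j => (b + j * e) %% 3 == 1) (iota (0 + (m - 3)) 3).
  rewrite add0n; set k := m - 3.
  have hb : ((b + k * e) %% 3 == 1) || ((b + k.+1 * e) %% 3 == 1) || ((b + k.+2 * e) %% 3 == 1).
    by case: he => ->; lia.
  by move: hb; rewrite /=; do 3 case: (_ %% 3 == 1).
have := IH (m - 3); lia.
Qed.

Lemma count_or (s : seq nat) (P Q : pred nat) : (forall b, P b -> ~~ Q b) ->
  count (fun b => P b || Q b) s = count P s + count Q s.
Proof.
move=> H; elim: s => //= x s ->; case Px: (P x) => /=; last by lia.
by rewrite (negbTE (H x Px)); lia.
Qed.

Lemma claim3 n A m al d : propP A ->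
  n + 36 <= 12 * count (U_set n A) (iota 1 n) ->
  count (A_top n A) (iota 1 n) <= 2 * m + 2 ->
  n + 36 < 9 * count (A_top n A) (iota 1 n) ->
  0 < d ->
  (forall k, k < m -> sumset (A_top n A) (al + k * d) /\ (4 %| al + k * d)%N) ->
  90 * count (B_half_mod3 n A 1) (iota 1 n) + 36 * count (U_set n A) (iota 1 n)
    + 15 * count (A_top n A) (iota 1 n) <= 11 * n + 360.
Proof.
set s := iota 1 n.
set U := U_set n A.
set T := count (A_top n A) s.
set B1 := B_half_mod3 n A 1.
move=> P hU hm hT d0 HAP.
have m2 : 2 <= m by lia.
have m18 : n < 18 * (m - 1) by lia.
have term : forall k, k < m -> exists x y, [/\ A x, A y, 2 * n < 3 * x /\ 2 * n < 3 * y,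
    x <= n /\ y <= n & x + y = al + k * d].
  move=> k km; case: (HAP k km) => [[x [y [/and3P[Ax h1 h2] /and3P[Ay h3 h4] E]]] _].
  by exists x, y; split.
have [a0 a1] : 4 * n < 3 * al /\ (4 %| al)%N.
  case: (term 0 (leq_trans (isT : 0 < 2) m2)) => x [y [_ _ [h1 h2] _ E]].
  case: (HAP 0 (leq_trans (isT : 0 < 2) m2)) => _; rewrite mul0n addn0 in E * => h4.
  split => //; lia.
have a2 : (4 %| al + d)%N.
  by case: (HAP 1 m2) => _; rewrite mul1n.
have a3 : al + (m - 1) * d <= 2 * n.
  have mm : m - 1 < m by lia.
  case: (term _ mm) => x [y [_ _ _ [h1 h2] E]]; lia.
have d12 : d < 12.
  rewrite ltnNge; apply/negP => h.
  have : (m - 1) * 12 <= (m - 1) * d by rewrite leq_mul2l h orbT.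
  lia.
have [e [de he]] : exists e, d = 4 * e /\ (e = 1 \/ e = 2).
  exists (d %/ 4); move: a1 a2; rewrite /dvdn => /eqP a1 /eqP a2; lia.
have [be ab] : exists be, al = 4 * be.
  exists (al %/ 4); move: a1; rewrite /dvdn => /eqP a1; lia.
set Fp := fun b => [exists k : 'I_m, 4 * b == al + k * d].
have HF : forall b, Fp b -> [/\ n < 3 * b, 2 * b <= n, 0 < b & ~~ B_half n A b].
  move=> b /existsP[k /eqP E].
  case: (term k (ltn_ord k)) => x [y [Ax Ay [h1 h2] [h3 h4] E']].
  split; try lia.
  apply/negP => hb; apply: (B_avoid P hb Ax Ay); try lia.
  by rewrite E' -E; apply/dvdnP; exists 4; lia.
set F := fun b => (b %% 3 == 1) && Fp b.
set F' := fun b => F b && (2 * n < 5 * b).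
set Fm := fun b => F b && ~~ (2 * n < 5 * b).
have cF : count F s = count F' s + count Fm s by apply: count_split.
have hFm : 3 * count Fm s <= (2 * n) %/ 5 - n %/ 3 + 3 - 1.
  apply: (class_count (r:=1)) => //; first exact: iota_uniq.
  move=> b _ /andP[/andP[/eqP h1 /HF[k1 k2 k3 _]] k4]; rewrite h1 eqxx andbT.
  apply/andP; split; lia.
have hFl : m <= 3 * count F s + 2.
  have := lb3 be he m.
  have : count (fun j => (be + j * e) %% 3 == 1) (iota 0 m) <= count F s.
    apply: (@count1 _ _ _ _ (fun j => be + j * e) (iota_uniq 0 m) (iota_uniq 1 n)).
      by move=> x y /= E; case: he => he'; subst e; lia.
    move=> j; rewrite mem_iota add0n => /andP[_ jm] hj.
    have fp : Fp (be + j * e).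
      by apply/existsP; exists (Ordinal jm); rewrite /= ab de; apply/eqP; case: he => he'; subst e; lia.
    case: (HF _ fp) => k1 k2 k3 _.
    by rewrite /F hj fp mem_iota; apply/andP; split => //; lia.
  lia.
set Bs := fun b => B1 b || F' b.
have cBs : count Bs s = count B1 s + count F' s.
  apply: count_or => b /andP[hb _]; apply/negP => /andP[/andP[_ /HF[_ _ _ /negP]]]; by [].
have H : 5 * count Bs s + 2 * count U s <=
  5 * count (fun z => (n < z <= 5 * (n %/ 2)) && (z %% 15 == 5)) (iota 1 (5 * n)) + 5.
  apply: core23 => //.
  - move=> b bs /orP[/andP[/B_ex[h1 h2 _] /eqP h3]|/andP[/andP[/eqP h1 /HF[k1 k2 k3 _]] k4]];
    rewrite mem_iota; apply/andP; split; try lia; apply/andP; split; try lia; apply/eqP; lia.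
  - move=> b x y bs xs ys /orP[/andP[hb _]|/andP[_ k]] /and4P[Ax h1 h2 _] /and4P[Ay h3 h4 _].
      apply/negP => /eqP E; apply: (B_avoid P hb Ax Ay h1 h3); rewrite -E; apply/dvdnP; exists 5; lia.
    lia.
have := Rbound n; lia.
Qed.

Unset Implicit Arguments.
Import Order.TTheory GRing.Theory Num.Theory.
Local Open Scope ring_scope.

Theorem mainTheorem18 (n : nat) (A : pred nat) :
  subset_n n A -> propP A ->
  (card_n n (U_set n A))%:R >= (n%:R / 12 + 3 : rat) ->
  [/\ (card_n n (B_half_mod3 n A 2))%:R
        <= (n%:R / 12 + 2 - (card_n n (U_set n A))%:R / 2 : rat),
      (card_n n (B_half_mod3 n A 1))%:R
        <= (n%:R / 10 + 2 - 2 * (card_n n (U_set n A))%:R / 5 : rat)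
    & (exists m : nat,
          (m%:R >= (card_n n (A_top n A))%:R / 2 - 1 :> rat) /\
          contains_AP (fun s => sumset (A_top n A) s /\ (4 %| s)%N) m) ->
      (card_n n (A_top n A))%:R <= (n%:R / 9 + 4 : rat) \/
      (card_n n (B_half_mod3 n A 1))%:R
        <= (11 * n%:R / 90 + 4 - 2 * (card_n n (U_set n A))%:R / 5
            - (card_n n (A_top n A))%:R / 6 : rat)].
Proof.
rewrite /card_n => _ P hU'.
have hU : (n + 36 <= 12 * count (U_set n A) (iota 1 n))%N.
  by rewrite -(ler_nat rat) !natrD; lra.
split.
- have := claim1 P hU; rewrite -(ler_nat rat) !natrD => h; lra.
- have := claim2 P hU; rewrite -(ler_nat rat) !natrD => h; lra.
- move=> [m [hm [al [d [d0 HAP]]]]].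
  case: (lerP (count (A_top n A) (iota 1 n))%:R (n%:R / 9 + 4 : rat)) => hT; [by left | right].
  have hm' : (count (A_top n A) (iota 1 n) <= 2 * m + 2)%N.
    by rewrite -(ler_nat rat) !natrD; lra.
  have hT' : (n + 36 < 9 * count (A_top n A) (iota 1 n))%N.
    by rewrite -(ltr_nat rat) !natrD; lra.
  have := claim3 P hU hm' hT' d0 HAP.
  rewrite -(ler_nat rat) !natrD => h; lra.
Qed.
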